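(* Let $\varepsilon<\frac12$. There is no mechanism $M$ that simultaneously satisfies symmetry, invariance with respect to repetition of alternatives (IRA), and $\varepsilon$-Pareto efficiency in all equilibria, where all three properties refer to the set $NEO_M(A)$ of (possibly mixed) Nash equilibrium outcomes.
   Context: Two players bargain over a collection (multiset) $A=(a^k)_{k\in[n]}$ of alternatives $a^k\in[0,1]^2$, $a^k_i$ being player $i$'s utility. A mechanism $M=(M_n)_n$ specifies for each $n$ signal sets $\Sigma_1(n),\Sigma_2(n)$ and a map $f_n:\Sigma_1(n)\times\Sigma_2(n)\to\Delta([n])$; with risk-neutral players it induces a game $\Gamma_M(A)$ with expected-utility payoffs, and $NEO_M(A)\subseteq[0,1]^2$ is the set of Nash equilibrium outcomes (expected utility vectors). Symmetry: a collection is symmetric if for all $x_1,x_2$, $|\{k:a^k=(x_1,x_2)\}|=|\{k:a^k=(x_2,x_1)\}|$; a set $S$ is symmetric if $(x_1,x_2)\in S\Rightarrow(x_2,x_1)\in S$; $M$ is symmetric if $NEO_M(A)$ is symmetric for every symmetric collection $A$. IRA: for $A=(a_k)_{k\in[n]}$ and $j\in[n]$ let $(A,j)=(a_1,\dots,a_n,a_j)$; $M$ satisfies IRA if $NEO_M(A)=NEO_M((A,j))$ for all $A$ and $j$. $\varepsilon$-Pareto efficiency in all equilibria: for every $A$ and every $x\in NEO_M(A)$ there is no $a\in A$ with $a_1>x_1+\varepsilon$ and $a_2>x_2+\varepsilon$. *)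

(* Defs.v *)
From HB Require Import structures.
From mathcomp Require Import all_boot all_order all_algebra.
From mathcomp Require Import reals.
Set Implicit Arguments. Unset Strict Implicit. Unset Printing Implicit Defensive.
Import Order.TTheory GRing.Theory Num.Theory.
Local Open Scope ring_scope.

Section Bargaining.
Variable R : realType.

Definition is_dist (T : finType) (p : T -> R) : Prop :=
  (forall t, 0 <= p t) /\ \sum_(t : T) p t = 1.

Definition collection (n : nat) := 'I_n -> R * R.

Definition in_unit_square (n : nat) (A : collection n) : Prop :=
  forall k, 0 <= (A k).1 <= 1 /\ 0 <= (A k).2 <= 1.

Record mechanism := Mechanism {
  sig1 : nat -> finType;
  sig2 : nat -> finType;
  sig1_nonempty : forall n, (0 < n)%N -> (0 < #|sig1 n|)%N;
  sig2_nonempty : forall n, (0 < n)%N -> (0 < #|sig2 n|)%N;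
  outcome : forall n, sig1 n -> sig2 n -> 'I_n -> R;
  outcome_dist : forall n s1 s2, (0 < n)%N -> is_dist (@outcome n s1 s2)
}.

Variable M : mechanism.

(* expected utility of player i (i = false: player 1, i = true: player 2)
   under mixed strategies m1, m2 *)
Definition exp_util (n : nat) (A : collection n) (i : bool)
  (m1 : sig1 M n -> R) (m2 : sig2 M n -> R) : R :=
  \sum_(x1 : sig1 M n) \sum_(x2 : sig2 M n)
     m1 x1 * m2 x2 * \sum_(k < n) @outcome M n x1 x2 k * (if i then (A k).2 else (A k).1).

Definition is_NE (n : nat) (A : collection n)
  (m1 : sig1 M n -> R) (m2 : sig2 M n -> R) : Prop :=
  is_dist m1 /\ is_dist m2 /\
  (forall m1', is_dist m1' -> exp_util A false m1' m2 <= exp_util A false m1 m2) /\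
  (forall m2', is_dist m2' -> exp_util A true m1 m2' <= exp_util A true m1 m2).

Definition NEO (n : nat) (A : collection n) (x : R * R) : Prop :=
  exists m1 m2, is_NE A m1 m2 /\ x = (exp_util A false m1 m2, exp_util A true m1 m2).

Definition symmetric_collection (n : nat) (A : collection n) : Prop :=
  forall x1 x2 : R,
    #|[set k | A k == (x1, x2)]| = #|[set k | A k == (x2, x1)]|.

Definition symmetric_mechanism : Prop :=
  forall n (A : collection n), (0 < n)%N -> in_unit_square A ->
    symmetric_collection A ->
    forall x1 x2, NEO A (x1, x2) -> NEO A (x2, x1).

(* (A, j) = (a_1, ..., a_n, a_j) *)
Definition repeat_alt (n : nat) (A : collection n) (j : 'I_n) : collection n.+1 :=
  fun k => match unlift ord_max k with Some k' => A k' | None => A j end.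

Definition IRA : Prop :=
  forall n (A : collection n) (j : 'I_n), in_unit_square A ->
    forall x, NEO A x <-> NEO (repeat_alt A j) x.

Definition eps_pareto_all_eq (eps : R) : Prop :=
  forall n (A : collection n), (0 < n)%N -> in_unit_square A ->
    forall x, NEO A x ->
      ~ (exists k, x.1 + eps < (A k).1 /\ x.2 + eps < (A k).2).

End Bargaining.

(* Main.v *)
Require Import Defs.
From HB Require Import structures.
From mathcomp Require Import all_boot all_order all_algebra.
From mathcomp Require Import reals.
Import Order.TTheory GRing.Theory Num.Theory.
Local Open Scope ring_scope.
From mathcomp Require Import classical_sets.
From mathcomp Require Import lra.
Set Implicit Arguments. Unset Strict Implicit. Unset Printing Implicit Defensive.
Section MM.
Local Open Scope classical_set_scope.
Variable R : realType.

Lemma sum_ind (J : finType) (F : J -> R) j0 :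
  \sum_l F l * (l == j0)%:R = F j0.
Proof.
rewrite (bigD1 j0) //= eqxx mulr1 big1 ?addr0 // => l /negbTE ->.
by rewrite mulr0.
Qed.

Lemma le_sum_one (I : finType) (F : I -> R) i0 :
  (forall i, 0 <= F i) -> F i0 <= \sum_i F i.
Proof.
move=> h; rewrite (bigD1 i0) //= lerDl; apply: sumr_ge0 => i _; exact: h.
Qed.

Lemma sum_lin (I : finType) (x F G : I -> R) a b :
  \sum_i x i * (a * F i + b * G i) = a * \sum_i x i * F i + b * \sum_i x i * G i.
Proof.
rewrite !mulr_sumr -big_split /=; apply: eq_bigr => i _.
by rewrite mulrDr mulrCA [x i * (b * _)]mulrCA.
Qed.

Lemma widen_lift n (i : 'I_n) : widen_ord (leqnSn n) i = lift ord_max i.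
Proof. by apply: val_inj; rewrite /= /bump leqNgt ltn_ord. Qed.

Lemma unlift_widen n (i : 'I_n) : unlift ord_max (widen_ord (leqnSn n) i) = Some i.
Proof. by rewrite widen_lift liftK. Qed.

Definition altX (n : nat) (J : finType) (A : 'I_n -> J -> R) :=
  exists x : 'I_n -> R, (forall i, 0 <= x i) /\ 0 < \sum_i x i /\
     forall j, 0 <= \sum_i x i * A i j.
Definition altY (n : nat) (J : finType) (A : 'I_n -> J -> R) :=
  exists y : J -> R, (forall j, 0 <= y j) /\
     forall i, \sum_j A i j * y j <= -1.

Lemma alt n : forall (J : finType) (A : 'I_n -> J -> R), altX A \/ altY A.
Proof.
elim: n => [|n IH] J A.
  by right; exists (fun _ => 0); split => // -[].
set r := A ord_max.
case: (boolP [exists j, r j < 0]); last first.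
  move=> /existsPn hr; left; exists (fun i => (i == ord_max)%:R).
  split; first by move=> i; rewrite ler0n.
  split.
    by rewrite (bigD1 ord_max) //= eqxx big1 ?addr0 // => i /negbTE ->.
  move=> j; rewrite (eq_bigr (fun i => A i j * (i == ord_max)%:R)); last first.
    by move=> i _; rewrite mulrC.
  by rewrite (sum_ind (fun i => A i j)) -/r leNgt hr.
case/existsP=> k0 hk0.
pose kp (k : J) := if r k < 0 then k else k0.
have hkp k : r (kp k) < 0 by rewrite /kp; case: ifP.
pose al (jk : J * J) := if 0 < r jk.1 then - r (kp jk.2) else 1.
pose be (jk : J * J) := if 0 < r jk.1 then r jk.1 else 0.
have hal jk : 0 <= al jk.
  by rewrite /al; case: ifP => _ //; rewrite oppr_ge0 ltW.
have hbe jk : 0 <= be jk.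
  by rewrite /be; case: ifP => // /ltW.
pose A' (i : 'I_n) (jk : J * J) :=
  al jk * A (widen_ord (leqnSn n) i) jk.1 + be jk * A (widen_ord (leqnSn n) i) (kp jk.2).
case: (IH _ A') => [[x' [hx0 [hxs hxc]]] | [y' [hy0 hyr]]].
-
  left.
  pose phi l := \sum_i x' i * A (widen_ord (leqnSn n) i) l.
  have hphi jk : 0 <= al jk * phi jk.1 + be jk * phi (kp jk.2).
    move: (hxc jk); rewrite /A' /phi sum_lin //.
  pose kmin := [arg min_(k < k0 | r k < 0) (phi k / - r k)]%O.
  have [hkm hkmin] : r kmin < 0 /\ forall k, r k < 0 -> phi kmin / - r kmin <= phi k / - r k.
    rewrite /kmin; case: (@arg_minP _ _ J k0 (fun k => r k < 0) (fun k => phi k / - r k) hk0) => k hk hmin.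
    by split => // k' hk'; apply: hmin.
  have phi_nonpos j : ~~ (0 < r j) -> 0 <= phi j.
    move=> hj; move: (hphi (j, j)); rewrite /al /be /= (negbTE hj).
    by rewrite mul1r mul0r addr0.
  pose t := phi kmin / - r kmin.
  have ht : 0 <= t.
    apply: divr_ge0; last by rewrite oppr_ge0 ltW.
    by apply: phi_nonpos; rewrite -leNgt ltW.
  exists (fun i => match unlift ord_max i with Some i' => x' i' | None => t end).
  split.
    by move=> i; case: unlift.
  split.
    rewrite big_ord_recr /= unlift_none.
    under eq_bigr do rewrite unlift_widen.
    by apply: ltr_wpDr.
  move=> j; rewrite big_ord_recr /= unlift_none.
  under eq_bigr do rewrite unlift_widen.
  rewrite -/(phi j) -/r.
  have hmr : 0 < - r kmin by rewrite oppr_gt0.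
  case: (ltrgtP 0 (r j)) => hj.
  + move: (hphi (j, kmin)); rewrite /al /be /= hj /kp hkm.
    move=> h.
    have -> : phi j + t * r j = (- r kmin * phi j + r j * phi kmin) / - r kmin.
      rewrite /t mulrDl; congr (_ + _).
        by rewrite mulrC mulrA mulVf ?mul1r // gt_eqF.
      by rewrite mulrAC (mulrC (phi kmin)).
    by rewrite divr_ge0 // ltW.
  + have := hkmin j hj; rewrite -/t => h.
    have h2 : t * - r j <= phi j.
      by rewrite -ler_pdivlMr ?oppr_gt0.
    by rewrite -(opprK (t * r j)) subr_ge0 -mulrN.
  + rewrite -hj mulr0 addr0; apply: phi_nonpos; by rewrite -hj ltxx.
-
  right.
  pose y0 l := \sum_jk y' jk * (al jk * (l == jk.1)%:R + be jk * (l == kp jk.2)%:R).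
  have hy00 l : 0 <= y0 l.
    apply: sumr_ge0 => jk _; apply: mulr_ge0 => //.
    by apply: addr_ge0; apply: mulr_ge0 => //; rewrite ler0n.
  have rowy0 (F : J -> R) : \sum_l F l * y0 l =
      \sum_jk y' jk * (al jk * F jk.1 + be jk * F (kp jk.2)).
    rewrite /y0.
    under eq_bigr do rewrite mulr_sumr.
    rewrite exchange_big /=; apply: eq_bigr => jk _.
    under eq_bigr do rewrite mulrCA.
    rewrite -mulr_sumr; congr (_ * _).
    under eq_bigr do rewrite mulrDr mulrCA [F _ * (be _ * _)]mulrCA.
    by rewrite big_split /= -!mulr_sumr !sum_ind.
  have last0 : \sum_l r l * y0 l <= 0.
    rewrite rowy0; apply: sumr_le0 => jk _.
    rewrite mulr_ge0_le0 //.
    rewrite /al /be; case: ifP => h.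
      by rewrite mulNr mulrC addNr.
    by rewrite mul1r mul0r addr0 leNgt h.
  pose M := \sum_i `|A (widen_ord (leqnSn n) i) k0|.
  have hM i : A (widen_ord (leqnSn n) i) k0 <= M.
    apply: le_trans (ler_norm _) _.
    by apply: (@le_sum_one _ (fun i => `|A (widen_ord (leqnSn n) i) k0|) i) => i'.
  have hM0 : 0 <= M by apply: sumr_ge0 => i _.
  pose s := 1 + (- r k0)^-1.
  have hs1 : 1 <= s by rewrite lerDl invr_ge0 oppr_ge0 ltW.
  exists (fun l => s * ((1 + M) * y0 l + (l == k0)%:R)).
  split.
    move=> l; apply: mulr_ge0; first by apply: le_trans hs1.
    by apply: addr_ge0; [apply: mulr_ge0 => //; apply: addr_ge0 | rewrite ler0n].
  have rowE (F : J -> R) : \sum_l F l * (s * ((1 + M) * y0 l + (l == k0)%:R)) =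
      s * ((1 + M) * \sum_l F l * y0 l + F k0).
    under eq_bigr do rewrite mulrCA mulrDr mulrCA.
    rewrite -mulr_sumr big_split /= -mulr_sumr.
    by congr (_ * (_ + _)); rewrite sum_ind.
  move=> i; rewrite rowE.
  case: (unliftP ord_max i) => [i'|] ->.
  + rewrite -widen_lift.
    have h1 : \sum_l A (widen_ord (leqnSn n) i') l * y0 l <= -1.
      rewrite rowy0; apply: le_trans (hyr i'); rewrite le_eqVlt; apply/orP; left.
      apply/eqP; apply: eq_bigr => jk _; by rewrite mulrC.
    have h2 : (1 + M) * \sum_l A (widen_ord (leqnSn n) i') l * y0 l +
              A (widen_ord (leqnSn n) i') k0 <= -1.
      have h3 : (1 + M) * \sum_l A (widen_ord (leqnSn n) i') l * y0 l <= - (1 + M).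
        by rewrite -mulrN1 ler_wpM2l // addr_ge0.
      have := hM i'; lra.
    have h4 : s * ((1 + M) * \sum_l A (widen_ord (leqnSn n) i') l * y0 l +
              A (widen_ord (leqnSn n) i') k0) <= s * -1.
      by rewrite ler_wpM2l // (le_trans _ hs1).
    apply: le_trans h4 _; rewrite mulrN1 lerN2 //.
  + rewrite -/r.
    have h3 : (1 + M) * \sum_l r l * y0 l <= 0.
      by rewrite mulr_ge0_le0 // addr_ge0.
    have h4 : s * ((1 + M) * \sum_l r l * y0 l + r k0) <= s * r k0.
      apply: ler_wpM2l; first exact: le_trans ler01 hs1.
      lra.
    apply: le_trans h4 _.
    have e : (- r k0)^-1 * r k0 = -1.
      by rewrite invrN mulNr mulVf // lt_eqF.
    rewrite /s mulrDl mul1r e.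
    have := hk0; lra.
Qed.

Lemma sum_enum (I : finType) (F : I -> R) :
  \sum_i F i = \sum_(k < #|I|) F (enum_val k).
Proof.
rewrite (reindex (enum_val : 'I_#|I| -> I)) //=; exact: onW_bij (enum_val_bij I).
Qed.

Lemma alt_fin (I J : finType) (A : I -> J -> R) :
  (exists x : I -> R, (forall i, 0 <= x i) /\ 0 < \sum_i x i /\
     forall j, 0 <= \sum_i x i * A i j)
  \/ (exists y : J -> R, (forall j, 0 <= y j) /\
     forall i, \sum_j A i j * y j <= -1).
Proof.
case: (alt (fun (k : 'I_#|I|) j => A (enum_val k) j)) => [[x [h0 [h1 h2]]] | [y [h0 h1]]].
  left; exists (fun i => x (enum_rank i)); split; first by move=> i.
  split.
    by rewrite sum_enum; under eq_bigr do rewrite enum_valK.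
  by move=> j; rewrite sum_enum; under eq_bigr do rewrite enum_valK.
right; exists y; split => // i.
by have := h1 (enum_rank i); rewrite enum_rankK.
Qed.

Lemma sumB (I : finType) (x F : I -> R) v :
  \sum_i x i * (F i - v) = \sum_i x i * F i - v * \sum_i x i.
Proof.
rewrite mulr_sumr -sumrB; apply: eq_bigr => i _; by rewrite mulrBr (mulrC v).
Qed.

Lemma sumBr (I : finType) (x F : I -> R) v :
  \sum_i (v - F i) * x i = v * \sum_i x i - \sum_i x i * F i.
Proof.
rewrite mulr_sumr -sumrB; apply: eq_bigr => i _; by rewrite mulrBl (mulrC (F i)).
Qed.

Lemma sumBl (I : finType) (x F : I -> R) v :
  \sum_i x i * (v - F i) = v * \sum_i x i - \sum_i x i * F i.
Proof.
rewrite mulr_sumr -sumrB; apply: eq_bigr => i _; by rewrite mulrBr (mulrC v).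
Qed.

Lemma dist_norm (I : finType) (x : I -> R) :
  (forall i, 0 <= x i) -> 0 < \sum_i x i ->
  is_dist (fun i => x i / \sum_i x i).
Proof.
move=> h0 hs; split.
  by move=> i; rewrite divr_ge0 // ltW.
by rewrite -mulr_suml mulfV // gt_eqF.
Qed.

Lemma sum_norm (I : finType) (x F : I -> R) :
  \sum_i x i / (\sum_i x i) * F i = (\sum_i x i * F i) / \sum_i x i.
Proof.
rewrite [RHS]mulr_suml; apply: eq_bigr => i _; by rewrite mulrAC.
Qed.

Lemma dist_lb (I : finType) (w F : I -> R) c :
  is_dist w -> (forall i, c <= F i) -> c <= \sum_i w i * F i.
Proof.
move=> [h0 h1] hc.
have -> : c = \sum_i w i * c by rewrite -mulr_suml h1 mul1r.
by apply: ler_sum => i _; apply: ler_wpM2l.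
Qed.

Lemma dist_ub (I : finType) (w F : I -> R) c :
  is_dist w -> (forall i, F i <= c) -> \sum_i w i * F i <= c.
Proof.
move=> [h0 h1] hc.
have -> : c = \sum_i w i * c by rewrite -mulr_suml h1 mul1r.
by apply: ler_sum => i _; apply: ler_wpM2l.
Qed.

Lemma sum_pos (J : finType) (y G : J -> R) :
  (forall j, 0 <= y j) -> \sum_j G j * y j <= -1 -> 0 < \sum_j y j.
Proof.
move=> h0 h1; rewrite lt_def sumr_ge0 ?andbT //.
apply/negP => /eqP /psumr_eq0P hz.
have : \sum_j G j * y j = 0 by rewrite big1 // => j _; rewrite hz // mulr0.
by move=> e; move: h1; rewrite e; lra.
Qed.

Lemma exch (I J : finType) (x : I -> R) (y : J -> R) (A : I -> J -> R) :
  \sum_j y j * (\sum_i x i * A i j) = \sum_i x i * (\sum_j A i j * y j).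
Proof.
under eq_bigr do rewrite mulr_sumr.
rewrite exchange_big /=; apply: eq_bigr => i _.
rewrite mulr_sumr; apply: eq_bigr => j _.
by rewrite mulrCA (mulrC (y j)).
Qed.

Lemma minimax (I J : finType) (A : I -> J -> R) (i0 : I) (j0 : J) :
  (forall i j, 0 <= A i j <= 1) ->
  exists x y v, is_dist x /\ is_dist y /\
    (forall j, v <= \sum_i x i * A i j) /\ (forall i, \sum_j A i j * y j <= v).
Proof.
move=> hA.
pose S := [set c : R | exists x, is_dist x /\ forall j, c <= \sum_i x i * A i j].
have d0 : is_dist (fun i => (i == i0)%:R : R).
  split; first by move=> i; rewrite ler0n.
  by rewrite (bigD1 i0) //= eqxx big1 ?addr0 // => i /negbTE ->.
have S0 : S 0.
  exists (fun i => (i == i0)%:R); split => // j.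
  by apply: sumr_ge0 => i _; apply: mulr_ge0; [rewrite ler0n | case/andP: (hA i j)].
have ub : ubound S 1.
  move=> c [x [hx hc]]; apply: le_trans (hc j0) _.
  by apply: dist_ub => // i; case/andP: (hA i j0).
have hs : has_sup S by split; [exists 0 | exists 1].
set v := sup S.
have Sv : S v.
  case: (alt_fin (fun i j => A i j - v)) => [[x [h0 [h1 h2]]] | [y [h0 h1]]].
    exists (fun i => x i / \sum_i x i); split; first exact: dist_norm.
    move=> j; rewrite sum_norm ler_pdivlMr //.
    by move: (h2 j); rewrite sumB subr_ge0 mulrC.
  have hsy := sum_pos h0 (h1 i0).
  set sy := \sum_j y j in hsy.
  have hrow i : \sum_j A i j * (y j / sy) <= v - sy^-1.
    move: (h1 i).
    rewrite (eq_bigr (fun j => y j * (A i j - v))); last by move=> j _; rewrite mulrC.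
    rewrite sumB -/sy => h.
    rewrite (eq_bigr (fun j => (A i j * y j) / sy)); last by move=> j _; rewrite mulrA.
    rewrite -mulr_suml ler_pdivrMr // mulrBl mulVf ?gt_eqF //.
    rewrite (eq_bigr (fun j => y j * A i j)); last by move=> j _; rewrite mulrC.
    lra.
  have ub2 : ubound S (v - sy^-1).
    move=> c [x [hx hc]].
    have hyd : is_dist (fun j => y j / sy) by apply: dist_norm.
    apply: le_trans (dist_lb hyd hc) _.
    rewrite exch; exact: dist_ub.
  have := ge_sup (ex_intro _ 0 S0) ub2; rewrite -/v.
  have : 0 < sy^-1 by rewrite invr_gt0.
  lra.
case: Sv => x [hx hxv].
case: (alt_fin (fun j i => v - A i j)) => [[y [h0 [h1 h2]]] | [z [h0 h1]]].
  exists x, (fun j => y j / \sum_j y j), v; split => //; split; first exact: dist_norm.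
  split => // i.
  rewrite (eq_bigr (fun j => y j / (\sum_j y j) * A i j)); last by move=> j _; rewrite mulrC.
  rewrite sum_norm ler_pdivrMr //.
  by move: (h2 i); rewrite sumBl subr_ge0 mulrC.
exfalso.
have hsz := sum_pos h0 (h1 j0).
set sz := \sum_i z i in hsz.
have Sv2 : S (v + sz^-1).
  exists (fun i => z i / sz); split; first exact: dist_norm.
  move=> j; move: (h1 j); rewrite sumBr -/sz => h.
  rewrite sum_norm ler_pdivlMr // mulrDl mulVf ?gt_eqF //.
  rewrite -/sz; lra.
have := sup_upper_bound hs Sv2; rewrite -/v.
have : 0 < sz^-1 by rewrite invr_gt0.
lra.
Qed.
End MM.

Section G.
Variable R : realType.
Variable M : mechanism R.

Definition A2 : collection R 2 := fun k => if val k == 0%N then (1,0) else (0,1).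
Definition D3 : collection R 3 :=
  fun k => match unlift ord_max k with Some k' => A2 k' | None => (1,1) end.

Lemma widen_lift' n (i : 'I_n) : widen_ord (leqnSn n) i = lift ord_max i.
Proof. by apply: val_inj; rewrite /= /bump leqNgt ltn_ord. Qed.

Lemma unlift_widen' n (i : 'I_n) : unlift ord_max (widen_ord (leqnSn n) i) = Some i.
Proof. by rewrite widen_lift' liftK. Qed.

Definition Q n (m1 : sig1 M n -> R) (m2 : sig2 M n -> R) (k : 'I_n) :=
  \sum_x1 \sum_x2 m1 x1 * m2 x2 * outcome x1 x2 k.

Lemma exp_util_Q n (A : collection R n) i m1 m2 :
  exp_util A i m1 m2 = \sum_k Q m1 m2 k * (if i then (A k).2 else (A k).1).
Proof.
rewrite /exp_util /Q.
under [RHS]eq_bigr do rewrite mulr_suml.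
rewrite [RHS]exchange_big /=; apply: eq_bigr => x1 _.
under [RHS]eq_bigr do rewrite mulr_suml.
rewrite [RHS]exchange_big /=; apply: eq_bigr => x2 _.
rewrite mulr_sumr; apply: eq_bigr => k _; by rewrite mulrA.
Qed.

Lemma Q_ge0 n m1 m2 k : (0 < n)%N -> is_dist m1 -> is_dist m2 -> 0 <= @Q n m1 m2 k.
Proof.
move=> hn [h1 _] [h2 _]; apply: sumr_ge0 => x1 _; apply: sumr_ge0 => x2 _.
apply: mulr_ge0; first exact: mulr_ge0.
by case: (outcome_dist x1 x2 hn) => h _.
Qed.

Lemma sumQ n m1 m2 : (0 < n)%N -> is_dist m1 -> is_dist m2 -> \sum_k @Q n m1 m2 k = 1.
Proof.
move=> hn [_ s1] [_ s2]; rewrite /Q exchange_big /=.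
rewrite -s1; apply: eq_bigr => x1 _.
rewrite exchange_big /=.
rewrite [RHS](_ : m1 x1 = \sum_x2 m1 x1 * m2 x2); last by rewrite -mulr_sumr s2 mulr1.
apply: eq_bigr => x2 _.
by rewrite -mulr_sumr; case: (outcome_dist x1 x2 hn) => _ ->; rewrite mulr1.
Qed.

Lemma Q_l n m1 m2 k : @Q n m1 m2 k = \sum_x1 m1 x1 * (\sum_x2 outcome x1 x2 k * m2 x2).
Proof.
rewrite /Q; apply: eq_bigr => x1 _; rewrite mulr_sumr; apply: eq_bigr => x2 _.
by rewrite -mulrA (mulrC (m2 x2)).
Qed.

Lemma Q_r n m1 m2 k : @Q n m1 m2 k = \sum_x2 m2 x2 * (\sum_x1 m1 x1 * outcome x1 x2 k).
Proof.
rewrite /Q exchange_big /=; apply: eq_bigr => x2 _; rewrite mulr_sumr; apply: eq_bigr => x1 _.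
by rewrite mulrA (mulrC (m2 x2)).
Qed.

Definition w0 : 'I_3 := widen_ord (leqnSn 2) ord0.
Definition w1 : 'I_3 := widen_ord (leqnSn 2) (lift ord0 ord0).

Lemma exp3 (C : collection R 3) (c : R * R) m1 m2 :
  (forall k, C (widen_ord (leqnSn 2) k) = A2 k) -> C ord_max = c ->
  exp_util C false m1 m2 = Q m1 m2 w0 + Q m1 m2 ord_max * c.1 /\
  exp_util C true m1 m2 = Q m1 m2 w1 + Q m1 m2 ord_max * c.2.
Proof.
move=> hw hm; split; rewrite exp_util_Q big_ord_recr /= hm;
  under eq_bigr do rewrite hw;
  rewrite !big_ord_recl big_ord0 /= /w0 /w1 ?mulr1 ?mulr0 ?add0r ?addr0 //.
Qed.

Lemma exp2 m1 m2 :
  exp_util A2 false m1 m2 = Q m1 m2 ord0 /\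
  exp_util A2 true m1 m2 = Q m1 m2 (lift ord0 ord0).
Proof.
by rewrite !exp_util_Q !big_ord_recl !big_ord0 /= ?mulr1 ?mulr0 ?addr0 ?add0r.
Qed.

Lemma sumQ2 (m1 : sig1 M 2 -> R) (m2 : sig2 M 2 -> R) : is_dist m1 -> is_dist m2 ->
  Q m1 m2 ord0 + Q m1 m2 (lift ord0 ord0) = 1.
Proof.
move=> h1 h2; have := @sumQ 2 m1 m2 isT h1 h2.
by rewrite !big_ord_recl big_ord0 addr0.
Qed.

Lemma sumQ3 (m1 : sig1 M 3 -> R) (m2 : sig2 M 3 -> R) : is_dist m1 -> is_dist m2 ->
  Q m1 m2 w0 + Q m1 m2 w1 + Q m1 m2 ord_max = 1.
Proof.
move=> h1 h2; have := @sumQ 3 m1 m2 isT h1 h2.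
rewrite big_ord_recr /= !big_ord_recl !big_ord0 addr0. by [].
Qed.

Lemma A2_unit : in_unit_square A2.
Proof. by move=> k; rewrite /A2; case: ifP => _ /=; rewrite ?ler01 ?lexx. Qed.

Lemma D3_unit : in_unit_square D3.
Proof.
move=> k; rewrite /D3; case: (unliftP ord_max k) => [k'|] _.
  exact: A2_unit.
by rewrite /= ler01 lexx.
Qed.

Lemma A2_sym : symmetric_collection A2.
Proof.
move=> x1 x2.
have hrev k : A2 (rev_ord k) = ((A2 k).2, (A2 k).1).
  by case: k => [[|[|?]] ?].
rewrite -(card_preimset _ (@rev_ord_inj 2)); apply: eq_card => k.
rewrite !inE hrev.
by rewrite !xpair_eqE andbC.
Qed.

End G.

Theorem theorem3 (R : realType) (eps : R) (heps : eps < 2^-1) :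
  ~ exists M : mechanism R,
      [/\ symmetric_mechanism M, IRA M & eps_pareto_all_eq M eps].
Proof.
move=> [M [hsym hira hpar]].
have [s10 _] : exists s : sig1 M 2, true.
  by case/card_gt0P: (sig1_nonempty M (isT : (0 < 2)%N)) => s _; exists s.
have [s20 _] : exists s : sig2 M 2, true.
  by case/card_gt0P: (sig2_nonempty M (isT : (0 < 2)%N)) => s _; exists s.
pose P := fun s1 s2 => @outcome R M 2 s1 s2 ord0.
have hP : forall s1 s2, 0 <= P s1 s2 <= 1.
  move=> s1 s2; case: (outcome_dist s1 s2 (isT : (0 < 2)%N)) => h0 h1.
  apply/andP; split; first exact: h0.
  rewrite -h1; exact: (@le_sum_one _ _ (fun k => outcome s1 s2 k) ord0 h0).
have [m1 [m2 [v [d1 [d2 [g1 g2]]]]]] := minimax s10 s20 hP.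
have U1 m1' : is_dist m1' -> Q m1' m2 ord0 <= v.
  by move=> d; rewrite Q_l; apply: dist_ub.
have U2 m2' : is_dist m2' -> v <= Q m1 m2' ord0.
  by move=> d; rewrite Q_r; apply: dist_lb.
have Ueq : Q m1 m2 ord0 = v by apply/le_anti; rewrite U1 // U2.
have NE : NEO M (A2 R) (v, 1 - v).
  exists m1, m2; split; last first.
    by rewrite (exp2 m1 m2).1 (exp2 m1 m2).2 -(sumQ2 d1 d2) Ueq addrC addKr.
  split => //; split => //; split.
    by move=> m1' d1'; rewrite !(exp2 _ _).1 Ueq U1.
  move=> m2' d2'; rewrite !(exp2 _ _).2.
  have := sumQ2 d1 d2'; have := sumQ2 d1 d2; have := U2 m2' d2'; lra.
have := hsym 2 (A2 R) isT (A2_unit R) (@A2_sym R) v (1 - v) NE.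
case=> [m1' [m2' [[d1' [d2' [h1 h2]]] e]]].
case: e; rewrite (exp2 m1' m2').1 (exp2 m1' m2').2 => e1 e2.
have hv1 : 1 - v <= v.
  have := h2 m2 d2; rewrite (exp2 m1' m2).2 (exp2 m1' m2').2 => h.
  have := sumQ2 d1' d2; have := sumQ2 d1' d2'; have := U1 m1' d1'; lra.
have hv2 : v <= 1 - v.
  have := h1 m1 d1; rewrite (exp2 m1 m2').1 (exp2 m1' m2').1 => h.
  have := U2 m2' d2'; lra.
have [hB1 hB2] : (forall k, repeat_alt (A2 R) (lift ord0 ord0) (widen_ord (leqnSn 2) k) = (A2 R) k) /\
    repeat_alt (A2 R) (lift ord0 ord0) ord_max = (0, 1).
  by split => [k|]; rewrite /repeat_alt ?unlift_widen' ?unlift_none.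
have [hC1 hC2] : (forall k, repeat_alt (A2 R) ord0 (widen_ord (leqnSn 2) k) = (A2 R) k) /\
    repeat_alt (A2 R) ord0 ord_max = (1, 0).
  by split => [k|]; rewrite /repeat_alt ?unlift_widen' ?unlift_none.
have [hD1 hD2] : (forall k, (D3 R) (widen_ord (leqnSn 2) k) = (A2 R) k) /\ (D3 R) ord_max = (1, 1).
  by split => [k|]; rewrite /D3 ?unlift_widen' ?unlift_none.
have := (hira 2 (A2 R) (lift ord0 ord0) (A2_unit R) (v, 1 - v)).1 NE.
case=> [n1 [n2 [[dn1 [dn2 [_ hn2]]] en]]].
have Bq m2'' : is_dist m2'' -> v <= Q n1 m2'' w0.
  move=> d; have := hn2 m2'' d.
  rewrite (exp3 n1 m2'' hB1 hB2).2 (exp3 n1 n2 hB1 hB2).2.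
  case: en; rewrite (exp3 n1 n2 hB1 hB2).1 (exp3 n1 n2 hB1 hB2).2 => _ <-.
  have := sumQ3 dn1 d; rewrite /= mulr1; lra.
have := (hira 2 (A2 R) ord0 (A2_unit R) (v, 1 - v)).1 NE.
case=> [k1 [k2 [[dk1 [dk2 [hk1 _]]] ek]]].
have Cq m1'' : is_dist m1'' -> 1 - v <= Q m1'' k2 w1.
  move=> d; have := hk1 m1'' d.
  rewrite (exp3 m1'' k2 hC1 hC2).1 (exp3 k1 k2 hC1 hC2).1.
  case: ek; rewrite (exp3 k1 k2 hC1 hC2).1 (exp3 k1 k2 hC1 hC2).2 => <- _.
  have := sumQ3 d dk2; rewrite /= mulr1; lra.
have q0 := Bq k2 dk2.
have q1 := Cq n1 dn1.
have q2 := Q_ge0 ord_max (isT : (0 < 3)%N) dn1 dk2.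
have s3 := sumQ3 dn1 dk2.
have ND : NEO M (D3 R) (exp_util (D3 R) false n1 k2, exp_util (D3 R) true n1 k2).
  exists n1, k2; split => //; split => //; split => //; split.
    move=> m1'' d; rewrite (exp3 m1'' k2 hD1 hD2).1 (exp3 n1 k2 hD1 hD2).1 /= !mulr1.
    have := Cq m1'' d; have := sumQ3 d dk2; lra.
  move=> m2'' d; rewrite (exp3 n1 m2'' hD1 hD2).2 (exp3 n1 k2 hD1 hD2).2 /= !mulr1.
  have := Bq m2'' d; have := sumQ3 dn1 d; lra.
apply: (hpar 3 (D3 R) isT (D3_unit R) _ ND).
exists ord_max; rewrite hD2 /=.
rewrite (exp3 n1 k2 hD1 hD2).1 (exp3 n1 k2 hD1 hD2).2 /= !mulr1.
have hv : v = 2^-1 by lra.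
split; lra.
Qed.
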